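(* Let $S$ be an idempotent semiring satisfying the identity $x+xyx+x\approx x$. Then the relation $\sigma$ on $S$ defined by $a\,\sigma\, b$ if and only if $aba=aba+a+aba$ and $bab=bab+b+bab$ is itself the least distributive lattice congruence on $S$.
   Context: An idempotent semiring is an algebra $(S,+,\cdot)$ with two binary operations such that $(S,+)$ and $(S,\cdot)$ are bands (associative, with $x+x=x$ and $xx=x$), and both distributive laws $x(y+z)=xy+xz$ and $(x+y)z=xz+yz$ hold; addition is not assumed commutative. A distributive lattice congruence on $S$ is a congruence $\rho$ such that $S/\rho$ is a distributive lattice, i.e. $S/\rho$ satisfies $x+y\approx y+x$, $xy\approx yx$ and $x+xy\approx x$. *)

(* Defs.v *)
Definition idempotent_semiring {S : Type} (add mul : S -> S -> S) : Prop :=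
  (forall x y z, add x (add y z) = add (add x y) z) /\
  (forall x, add x x = x) /\
  (forall x y z, mul x (mul y z) = mul (mul x y) z) /\
  (forall x, mul x x = x) /\
  (forall x y z, mul x (add y z) = add (mul x y) (mul x z)) /\
  (forall x y z, mul (add x y) z = add (mul x z) (mul y z)).

Definition equivalence_rel {S : Type} (rho : S -> S -> Prop) : Prop :=
  (forall x, rho x x) /\
  (forall x y, rho x y -> rho y x) /\
  (forall x y z, rho x y -> rho y z -> rho x z).

Definition congruence {S : Type} (add mul : S -> S -> S) (rho : S -> S -> Prop) : Prop :=
  equivalence_rel rho /\
  (forall a b c d, rho a b -> rho c d -> rho (add a c) (add b d)) /\
  (forall a b c d, rho a b -> rho c d -> rho (mul a c) (mul b d)).

(* S/rho satisfies x+y = y+x, xy = yx, x + xy = x (with the identities of an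
   idempotent semiring inherited, this is exactly "S/rho is a distributive lattice") *)
Definition dl_congruence {S : Type} (add mul : S -> S -> S) (rho : S -> S -> Prop) : Prop :=
  congruence add mul rho /\
  (forall x y, rho (add x y) (add y x)) /\
  (forall x y, rho (mul x y) (mul y x)) /\
  (forall x y, rho (add x (mul x y)) x).

Definition least_dl_congruence {S : Type} (add mul : S -> S -> S) (rho : S -> S -> Prop) : Prop :=
  dl_congruence add mul rho /\
  (forall tau, dl_congruence add mul tau -> forall a b, rho a b -> tau a b).

Definition sigma_rel {S : Type} (add mul : S -> S -> S) (a b : S) : Prop :=
  mul (mul a b) a = add (add (mul (mul a b) a) a) (mul (mul a b) a) /\
  mul (mul b a) b = add (add (mul (mul b a) b) b) (mul (mul b a) b).

(* Main.v *)
Require Import Defs.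
From Stdlib Require Import Setoid Morphisms List.
Import ListNotations.

Section Band.
Context {T : Type} {R : T -> T -> Prop} `{Req : Equivalence T R} (op : T -> T -> T)
  `{opP : Proper _ (R ==> R ==> R) op}.
Hypothesis assoc : forall x y z, R (op x (op y z)) (op (op x y) z).
Hypothesis idem : forall x, R (op x x) x.

Fixpoint ev (h : T) (t : list T) : T :=
  match t with nil => h | y :: t' => op h (ev y t') end.
Definition evl (d : T) (l : list T) := match l with nil => d | h :: t => ev h t end.

Lemma ev_app h t1 y t2 : R (ev h (t1 ++ y :: t2)) (op (ev h t1) (ev y t2)).
Proof.
  induction t1 as [|z t1 IH] in h |- *; simpl. reflexivity.
  rewrite IH. apply assoc.
Qed.

Lemma evl_app d l1 l2 : l1 <> [] -> l2 <> [] -> R (evl d (l1++l2)) (op (evl d l1) (evl d l2)).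
Proof. destruct l1, l2; try congruence. intros _ _. simpl. apply ev_app. Qed.

Lemma app_ne (U W : list T) : U <> [] -> U ++ W <> [].
Proof. destruct U; simpl; congruence. Qed.

Lemma repl d L U V Rr : U <> [] -> V <> [] -> R (evl d U) (evl d V) ->
  R (evl d (L++U++Rr)) (evl d (L++V++Rr)).
Proof.
  intros HU HV H.
  assert (S1 : R (evl d (U ++ Rr)) (evl d (V ++ Rr))).
  { destruct Rr as [|r Rr].
    - rewrite !app_nil_r. exact H.
    - rewrite (evl_app d U), (evl_app d V); try assumption; try discriminate.
      rewrite H. reflexivity. }
  destruct L as [|l L].
  - exact S1.
  - rewrite (evl_app d (l::L) (U++Rr)), (evl_app d (l::L) (V++Rr));
      try discriminate; try (apply app_ne; assumption).
    rewrite S1. reflexivity.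
Qed.

Lemma sq d U : U <> [] -> R (evl d (U ++ U)) (evl d U).
Proof. intros HU. rewrite evl_app by assumption. apply idem. Qed.

Definition D x y := R (op (op x y) x) x /\ R (op (op y x) y) y.

Lemma B1 x a z b : R x (op a (op z b)) -> R (op (op x z) x) x.
Proof.
  intros H. rewrite H. repeat rewrite <- assoc.
change (R (evl a [a;z;b;z;a;z;b]) (evl a [a;z;b])).
transitivity (evl a [a;z;b;z;a;z;b;z;b]); [exact (repl a [a;z;b;z;a] [z;b] [z;b;z;b] [] ltac:(discriminate) ltac:(discriminate) ltac:(symmetry; exact (sq a [z;b] ltac:(discriminate))))|].
transitivity (evl a [a;z;b;z;b]); [exact (repl a [] [a;z;b;z;a;z;b;z] [a;z;b;z] [b] ltac:(discriminate) ltac:(discriminate) ltac:(exact (sq a [a;z;b;z] ltac:(discriminate))))|].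
transitivity (evl a [a;z;b]); [exact (repl a [a] [z;b;z;b] [z;b] [] ltac:(discriminate) ltac:(discriminate) ltac:(exact (sq a [z;b] ltac:(discriminate))))|].
reflexivity.
Qed.

Lemma D_refl x : D x x.
Proof. split; rewrite !idem; reflexivity. Qed.

Lemma D_sym x y : D x y -> D y x.
Proof. intros [? ?]; split; assumption. Qed.

Lemma D_trans x y z : D x y -> D y z -> D x z.
Proof.
  intros H1 H2. split.
  - apply (B1 x (op x y) z (op y x)).
    assert (hx : R (op x (op y x)) x) by (rewrite assoc; exact (proj1 H1)).
    assert (hy : R (op y (op z y)) y) by (rewrite assoc; exact (proj1 H2)).
    repeat rewrite <- assoc.
change (R (evl x [x]) (evl x [x;y;z;y;x])).
transitivity (evl x [x;y;x]); [exact (repl x [] [x] [x;y;x] [] ltac:(discriminate) ltac:(discriminate) ltac:(symmetry; exact hx))|].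
transitivity (evl x [x;y;z;y;x]); [exact (repl x [x] [y] [y;z;y] [x] ltac:(discriminate) ltac:(discriminate) ltac:(symmetry; exact hy))|].
reflexivity.
  - apply (B1 z (op z y) x (op y z)).
    assert (hz : R (op z (op y z)) z) by (rewrite assoc; exact (proj2 H2)).
    assert (hy : R (op y (op x y)) y) by (rewrite assoc; exact (proj2 H1)).
    repeat rewrite <- assoc.
change (R (evl z [z]) (evl z [z;y;x;y;z])).
transitivity (evl z [z;y;z]); [exact (repl z [] [z] [z;y;z] [] ltac:(discriminate) ltac:(discriminate) ltac:(symmetry; exact hz))|].
transitivity (evl z [z;y;x;y;z]); [exact (repl z [z] [y] [y;x;y] [z] ltac:(discriminate) ltac:(discriminate) ltac:(symmetry; exact hy))|].
reflexivity.
Qed.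

Lemma D_opr x y w : D x y -> D (op x w) (op y w).
Proof.
  intros H.
  assert (hx : R (op x (op y x)) x) by (rewrite assoc; exact (proj1 H)).
  assert (hy : R (op y (op x y)) y) by (rewrite assoc; exact (proj2 H)).
  split.
  - apply (B1 (op x w) (op x (op y (op x w))) (op y w) (op y (op x w))).
    repeat rewrite <- assoc.
change (R (evl x [x;w]) (evl x [x;y;x;w;y;w;y;x;w])).
transitivity (evl x [x;y;x;w]); [exact (repl x [] [x] [x;y;x] [w] ltac:(discriminate) ltac:(discriminate) ltac:(symmetry; exact hx))|].
transitivity (evl x [x;y;x;w;y;x;w]); [exact (repl x [x] [y;x;w] [y;x;w;y;x;w] [] ltac:(discriminate) ltac:(discriminate) ltac:(symmetry; exact (sq x [y;x;w] ltac:(discriminate))))|].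
transitivity (evl x [x;y;x;w;y;w;y;x;w]); [exact (repl x [x;y;x] [w;y] [w;y;w;y] [x;w] ltac:(discriminate) ltac:(discriminate) ltac:(symmetry; exact (sq x [w;y] ltac:(discriminate))))|].
reflexivity.
  - apply (B1 (op y w) (op y (op x (op y w))) (op x w) (op x (op y w))).
    repeat rewrite <- assoc.
change (R (evl y [y;w]) (evl y [y;x;y;w;x;w;x;y;w])).
transitivity (evl y [y;x;y;w]); [exact (repl y [] [y] [y;x;y] [w] ltac:(discriminate) ltac:(discriminate) ltac:(symmetry; exact hy))|].
transitivity (evl y [y;x;y;w;x;y;w]); [exact (repl y [y] [x;y;w] [x;y;w;x;y;w] [] ltac:(discriminate) ltac:(discriminate) ltac:(symmetry; exact (sq y [x;y;w] ltac:(discriminate))))|].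
transitivity (evl y [y;x;y;w;x;w;x;y;w]); [exact (repl y [y;x;y] [w;x] [w;x;w;x] [y;w] ltac:(discriminate) ltac:(discriminate) ltac:(symmetry; exact (sq y [w;x] ltac:(discriminate))))|].
reflexivity.
Qed.

Lemma D_opl x y w : D x y -> D (op w x) (op w y).
Proof.
  intros H.
  assert (hx : R (op x (op y x)) x) by (rewrite assoc; exact (proj1 H)).
  assert (hy : R (op y (op x y)) y) by (rewrite assoc; exact (proj2 H)).
  split.
  - apply (B1 (op w x) (op w (op x (op y x))) (op w y) (op x (op w x))).
    repeat rewrite <- assoc.
change (R (evl w [w;x]) (evl w [w;x;y;x;w;y;x;w;x])).
transitivity (evl w [w;x;w;x]); [exact (repl w [] [w;x] [w;x;w;x] [] ltac:(discriminate) ltac:(discriminate) ltac:(symmetry; exact (sq w [w;x] ltac:(discriminate))))|].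
transitivity (evl w [w;x;y;x;w;x]); [exact (repl w [w] [x] [x;y;x] [w;x] ltac:(discriminate) ltac:(discriminate) ltac:(symmetry; exact hx))|].
transitivity (evl w [w;x;y;x;w;y;x;w;x]); [exact (repl w [w;x] [y;x;w] [y;x;w;y;x;w] [x] ltac:(discriminate) ltac:(discriminate) ltac:(symmetry; exact (sq w [y;x;w] ltac:(discriminate))))|].
reflexivity.
  - apply (B1 (op w y) (op w (op y (op x y))) (op w x) (op y (op w y))).
    repeat rewrite <- assoc.
change (R (evl w [w;y]) (evl w [w;y;x;y;w;x;y;w;y])).
transitivity (evl w [w;y;w;y]); [exact (repl w [] [w;y] [w;y;w;y] [] ltac:(discriminate) ltac:(discriminate) ltac:(symmetry; exact (sq w [w;y] ltac:(discriminate))))|].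
transitivity (evl w [w;y;x;y;w;y]); [exact (repl w [w] [y] [y;x;y] [w;y] ltac:(discriminate) ltac:(discriminate) ltac:(symmetry; exact hy))|].
transitivity (evl w [w;y;x;y;w;x;y;w;y]); [exact (repl w [w;y] [x;y;w] [x;y;w;x;y;w] [y] ltac:(discriminate) ltac:(discriminate) ltac:(symmetry; exact (sq w [x;y;w] ltac:(discriminate))))|].
reflexivity.
Qed.

Lemma D_comm x y : D (op x y) (op y x).
Proof.
  split; repeat rewrite <- assoc.
change (R (evl x [x;y;y;x;x;y]) (evl x [x;y])).
transitivity (evl x [x;y;y;x;y]); [exact (repl x [x;y;y] [x;x] [x] [y] ltac:(discriminate) ltac:(discriminate) ltac:(exact (sq x [x] ltac:(discriminate))))|].
transitivity (evl x [x;y;x;y]); [exact (repl x [x] [y;y] [y] [x;y] ltac:(discriminate) ltac:(discriminate) ltac:(exact (sq x [y] ltac:(discriminate))))|].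
transitivity (evl x [x;y]); [exact (repl x [] [x;y;x;y] [x;y] [] ltac:(discriminate) ltac:(discriminate) ltac:(exact (sq x [x;y] ltac:(discriminate))))|].
reflexivity.
change (R (evl y [y;x;x;y;y;x]) (evl y [y;x])).
transitivity (evl y [y;x;y;y;x]); [exact (repl y [y] [x;x] [x] [y;y;x] ltac:(discriminate) ltac:(discriminate) ltac:(exact (sq y [x] ltac:(discriminate))))|].
transitivity (evl y [y;x;y;x]); [exact (repl y [y;x] [y;y] [y] [x] ltac:(discriminate) ltac:(discriminate) ltac:(exact (sq y [y] ltac:(discriminate))))|].
transitivity (evl y [y;x]); [exact (repl y [] [y;x;y;x] [y;x] [] ltac:(discriminate) ltac:(discriminate) ltac:(exact (sq y [y;x] ltac:(discriminate))))|].
reflexivity.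
Qed.

Lemma D_of_R x y : R x y -> D x y.
Proof. intros H. unfold D. rewrite H. split; rewrite !idem; reflexivity. Qed.

Lemma D_op a b c d : D a b -> D c d -> D (op a c) (op b d).
Proof.
  intros H1 H2. apply D_trans with (op b c). apply D_opr; auto. apply D_opl; auto.
Qed.

End Band.

Section Lat.
Context {T : Type} {R : T -> T -> Prop} `{Req : Equivalence T R} (add mul : T -> T -> T)
  `{addP : Proper _ (R==>R==>R) add} `{mulP : Proper _ (R==>R==>R) mul}.
Hypothesis aA : forall x y z, R (add x (add y z)) (add (add x y) z).
Hypothesis aC : forall x y, R (add x y) (add y x).
Hypothesis aI : forall x, R (add x x) x.
Hypothesis mA : forall x y z, R (mul x (mul y z)) (mul (mul x y) z).
Hypothesis mI : forall x, R (mul x x) x.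
Hypothesis dl : forall x y z, R (mul x (add y z)) (add (mul x y) (mul x z)).
Hypothesis dr : forall x y z, R (mul (add x y) z) (add (mul x z) (mul y z)).
Hypothesis Ab : forall x y, R (add x (mul (mul x y) x)) x.

Definition lle u v := R (add u v) v.
Local Notation F := (@D T R mul).

Lemma le_trans u v w : lle u v -> lle v w -> lle u w.
Proof. unfold lle; intros H1 H2. rewrite <- H2, aA, H1. reflexivity. Qed.
Lemma le_R u v : R u v -> lle u v.
Proof. unfold lle; intros H; rewrite H; apply aI. Qed.
Lemma le_addl u v : lle u (add u v).
Proof. unfold lle. rewrite aA, aI. reflexivity. Qed.
Lemma le_addr u v : lle v (add u v).
Proof. unfold lle. rewrite aC, <- aA, aI. reflexivity. Qed.
Lemma le_add u v w : lle u w -> lle v w -> lle (add u v) w.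
Proof. unfold lle; intros H1 H2. rewrite <- aA, H2, H1. reflexivity. Qed.
Lemma le_antisym u v : lle u v -> lle v u -> R u v.
Proof. unfold lle; intros H1 H2. rewrite <- H1, <- H2 at 1. apply aC. Qed.
Lemma le_mul u u' v v' : lle u u' -> lle v v' -> lle (mul u v) (mul u' v').
Proof.
  unfold lle; intros H1 H2. apply le_trans with (mul u' v); unfold lle.
  - rewrite <- dr, H1. reflexivity.
  - rewrite <- dl, H2. reflexivity.
Qed.

Lemma Fadd_half a b c : R (mul (mul a b) a) a ->
  R (mul (mul (add a c) (add b c)) (add a c)) (add a c).
Proof.
  intros H. apply le_antisym.
  - unfold lle. rewrite aC. apply Ab.
  - apply le_add.
    + apply le_trans with (mul (mul a b) a). apply le_R; symmetry; auto.
      apply le_mul; [apply le_mul|]; apply le_addl.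
    + apply le_trans with (mul (mul c c) c). apply le_R; rewrite !mI; reflexivity.
      apply le_mul; [apply le_mul|]; apply le_addr.
Qed.

Lemma FaddR a b c : F a b -> F (add a c) (add b c).
Proof. intros [H1 H2]; split; apply Fadd_half; auto. Qed.

Lemma F_add a b c d : F a b -> F c d -> F (add a c) (add b d).
Proof.
  intros H1 H2. apply (D_trans mul mA mI) with (add b c). apply FaddR; auto.
  apply (D_trans mul mA mI) with (add c b). apply (D_of_R mul mI); auto.
  apply (D_trans mul mA mI) with (add d b). apply FaddR; auto.
  apply (D_of_R mul mI); auto.
Qed.

Lemma F_abs x y : F (add x (mul x y)) x.
Proof.
  assert (K : R (mul (add x (mul x y)) x) x) by (rewrite dr, mI; apply Ab).
  assert (K2 : R (mul x (add x (mul x y))) (add x (mul x y))) by (rewrite dl, mA, !mI; reflexivity).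
  split. rewrite K, K2; reflexivity. rewrite K2, K; reflexivity.
Qed.
End Lat.

Theorem theorem2p5 (S : Type) (add mul : S -> S -> S)
  (HS : idempotent_semiring add mul)
  (Hid : forall x y, add (add x (mul (mul x y) x)) x = x) :
  least_dl_congruence add mul (sigma_rel add mul).
Proof.
  destruct HS as (aA & aI & mA & mI & dl & dr).
  assert (addPe : Proper (eq ==> eq ==> eq) add) by (repeat intro; subst; reflexivity).
  assert (mulPe : Proper (eq ==> eq ==> eq) mul) by (repeat intro; subst; reflexivity).
  set (E := @D S eq add).
  assert (Eeq : Equivalence E).
  { split.
    - intro x. exact (@D_refl S eq _ add addPe aI x).
    - intros x y. apply D_sym.
    - intros x y z. exact (@D_trans S eq _ add addPe aA aI x y z). }
  assert (EaddP : Proper (E ==> E ==> E) add).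
  { intros a b h c d h'. exact (@D_op S eq _ add addPe aA aI a b c d h h'). }
  assert (Emul_l : forall u v w, E u v -> E (mul w u) (mul w v)).
  { intros u v w [h1 h2]. split; rewrite <- !dl; congruence. }
  assert (Emul_r : forall u v w, E u v -> E (mul u w) (mul v w)).
  { intros u v w [h1 h2]. split; rewrite <- !dr; congruence. }
  assert (EmulP : Proper (E ==> E ==> E) mul).
  { intros a b h c d h'. transitivity (mul b c); auto. }
  assert (aAE : forall x y z, E (add x (add y z)) (add (add x y) z)).
  { intros. apply (@D_of_R S eq _ add addPe aI). auto. }
  assert (aCE : forall x y, E (add x y) (add y x)).
  { intros. exact (@D_comm S eq _ add addPe aA aI x y). }
  assert (aIE : forall x, E (add x x) x).
  { intros. apply (@D_of_R S eq _ add addPe aI). auto. }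
  assert (mAE : forall x y z, E (mul x (mul y z)) (mul (mul x y) z)).
  { intros. apply (@D_of_R S eq _ add addPe aI). auto. }
  assert (mIE : forall x, E (mul x x) x).
  { intros. apply (@D_of_R S eq _ add addPe aI). auto. }
  assert (dlE : forall x y z, E (mul x (add y z)) (add (mul x y) (mul x z))).
  { intros. apply (@D_of_R S eq _ add addPe aI). auto. }
  assert (drE : forall x y z, E (mul (add x y) z) (add (mul x z) (mul y z))).
  { intros. apply (@D_of_R S eq _ add addPe aI). auto. }
  assert (AbE : forall x y, E (add x (mul (mul x y) x)) x).
  { intros x y. split.
    - rewrite Hid, aA, aI. reflexivity.
    - rewrite aA, aI, Hid. reflexivity. }
  assert (sig_iff : forall a b, sigma_rel add mul a b <-> @D S E mul a b).
  { intros a b. split.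
    - intros [h1 h2]. split; split; auto.
    - intros [[h1 _] [h2 _]]. split; auto. }
  set (G := @D S E mul).
  assert (G_refl : forall x, G x x) by exact (@D_refl S E Eeq mul EmulP mIE).
  assert (G_trans : forall x y z, G x y -> G y z -> G x z)
    by exact (@D_trans S E Eeq mul EmulP mAE mIE).
  assert (G_add : forall a b c d, G a b -> G c d -> G (add a c) (add b d))
    by exact (@F_add S E Eeq add mul EaddP EmulP aAE aCE aIE mAE mIE dlE drE AbE).
  assert (G_mul : forall a b c d, G a b -> G c d -> G (mul a c) (mul b d))
    by exact (@D_op S E Eeq mul EmulP mAE mIE).
  assert (G_cadd : forall x y, G (add x y) (add y x))
    by (intros; exact (@D_of_R S E Eeq mul EmulP mIE _ _ (aCE x y))).
  assert (G_cmul : forall x y, G (mul x y) (mul y x))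
    by exact (@D_comm S E Eeq mul EmulP mAE mIE).
  assert (G_abs : forall x y, G (add x (mul x y)) x)
    by exact (@F_abs S E Eeq add mul EaddP EmulP mAE mIE dlE drE AbE).
  unfold least_dl_congruence, dl_congruence, congruence, equivalence_rel.
  split; [split; [split; [split; [|split]|split]|split; [|split]]|].
  - intros x. apply sig_iff, G_refl.
  - intros x y H. apply sig_iff. apply sig_iff in H. apply D_sym. exact H.
  - intros x y z H1 H2. apply sig_iff. apply sig_iff in H1, H2. exact (G_trans _ _ _ H1 H2).
  - intros a b c d H1 H2. apply sig_iff. apply sig_iff in H1, H2. exact (G_add _ _ _ _ H1 H2).
  - intros a b c d H1 H2. apply sig_iff. apply sig_iff in H1, H2. exact (G_mul _ _ _ _ H1 H2).
  - intros. apply sig_iff. apply G_cadd.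
  - intros. apply sig_iff. apply G_cmul.
  - intros. apply sig_iff. apply G_abs.
  - intros tau [[[tr [ts tt]] [tadd tmul]] [tca [tcm tab]]] a b Hs.
    assert (tE : Equivalence tau) by (split; [exact tr | exact ts | exact tt]).
    assert (tA : Proper (tau ==> tau ==> tau) add) by (intros ? ? ? ? ? ?; auto).
    assert (tM : Proper (tau ==> tau ==> tau) mul) by (intros ? ? ? ? ? ?; auto).
    assert (key : forall a b, mul (mul a b) a = add (add (mul (mul a b) a) a) (mul (mul a b) a) ->
              tau (mul (mul a b) a) (mul a b) /\ tau (mul (mul a b) a) a).
    { clear Hs a b. intros a b H.
      assert (h1 : tau (mul (mul a b) a) (mul a b)).
      { rewrite <- mA. rewrite (tcm b a). rewrite mA, mI. reflexivity. }
      split; auto.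
      rewrite H at 1. rewrite h1. rewrite (tca (mul a b) a).
      rewrite <- aA, aI. apply tab. }
    destruct Hs as [Ha Hb].
    destruct (key a b Ha) as [ka1 ka2]. destruct (key b a Hb) as [kb1 kb2].
    rewrite <- ka2, ka1, tcm, <- kb1, kb2. reflexivity.
Qed.
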